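(* The poset $(P;\leq)$ defined below is order-isomorphic to an order component of some representable poset. Moreover, $(P;\le)$ is connected (it has a single order component).
   Context: Let $P=\{p\}\cup\{p_{i_0,\ldots,i_n}: 0\le n<\omega,\ i_0,\ldots,i_n\in\omega\}$ (all these symbols distinct). Let $\le$ be the reflexive–transitive closure of the following strict relations: (0) for all $0\le j<i<\omega$: $p<p_i<p_j$; (E) for all $r\ge 0$, all $i_0,\ldots,i_{2r}\in\omega$, all $k\le i_{2r}$ and all $i<j<\omega$: $p_{i_0,\ldots,i_{2r},i}<p_{i_0,\ldots,i_{2r},j}<p_{i_0,\ldots,i_{2r-1},k}$ (for $r=0$ the last element is $p_k$); (O) for all $r\ge0$, all $i_0,\ldots,i_{2r+1}\in\omega$, all $k\le i_{2r+1}$ and all $j<i<\omega$: $p_{i_0,\ldots,i_{2r},k}<p_{i_0,\ldots,i_{2r+1},i}<p_{i_0,\ldots,i_{2r+1},j}$. This $\le$ is a partial order on the countable set $P$. A poset is representable if it is order-isomorphic to the poset of prime ideals (ordered by inclusion) of a bounded distributive lattice, equivalently iff it carries a compact topology in which any $x\not\ge y$ are separated by a clopen down-set containing $x$ and not $y$. An order component of a poset is an equivalence class of the transitive closure of the comparability relation. *)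

(* Defs.v *)
From HB Require Import structures.
From mathcomp Require Import all_boot all_order.
From Stdlib Require Import Relations.
Set Implicit Arguments. Unset Strict Implicit. Unset Printing Implicit Defensive.

(* Elements of P are finite sequences of naturals:
   [::] stands for p, and a nonempty s = [:: i_0; ...; i_n] for p_{i_0,...,i_n}. *)
Definition Pt := seq nat.

Inductive gen : Pt -> Pt -> Prop :=
| gen0a (i j : nat) : j < i -> gen [::] [:: i]
| gen0b (i j : nat) : j < i -> gen [:: i] [:: j]
(* (E): s = t ++ [m] of odd length 2r+1 (so size t = 2r even), k <= m, i < j :
        p_{s,i} < p_{s,j} < p_{t,k} *)
| genEa (t : seq nat) (m k i j : nat) : ~~ odd (size t) -> k <= m -> i < j ->
    gen (rcons (rcons t m) i) (rcons (rcons t m) j)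
| genEb (t : seq nat) (m k i j : nat) : ~~ odd (size t) -> k <= m -> i < j ->
    gen (rcons (rcons t m) j) (rcons t k)
(* (O): s = t ++ [m] of even length 2r+2 (so size t = 2r+1 odd), k <= m, j < i :
        p_{t,k} < p_{s,i} < p_{s,j} *)
| genOa (t : seq nat) (m k i j : nat) : odd (size t) -> k <= m -> j < i ->
    gen (rcons t k) (rcons (rcons t m) i)
| genOb (t : seq nat) (m k i j : nat) : odd (size t) -> k <= m -> j < i ->
    gen (rcons (rcons t m) i) (rcons (rcons t m) j).

Definition Ple : Pt -> Pt -> Prop := clos_refl_trans Pt gen.

Definition comparable (T : Type) (le : T -> T -> Prop) (x y : T) : Prop :=
  le x y \/ le y x.

Definition same_component (T : Type) (le : T -> T -> Prop) (x y : T) : Prop :=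
  clos_trans T (comparable le) x y.

Definition connected (T : Type) (le : T -> T -> Prop) : Prop :=
  forall x y : T, same_component le x y.

Definition prime_ideal (d : Order.disp_t) (L : tbDistrLatticeType d)
    (I : L -> Prop) : Prop :=
  [/\ I Order.bottom,
      (forall x y : L, Order.le y x -> I x -> I y),
      (forall x y : L, I x -> I y -> I (Order.join x y)),
      ~ I Order.top &
      (forall x y : L, I (Order.meet x y) -> I x \/ I y)].

(* (Q, leQ) is representable: order-isomorphic to the prime ideals of some
   bounded distributive lattice, ordered by inclusion (ideals compared
   extensionally as sets). *)
Definition representable (Q : Type) (leQ : Q -> Q -> Prop) : Prop :=
  exists (d : Order.disp_t) (L : tbDistrLatticeType d) (g : Q -> L -> Prop),
    [/\ (forall q, prime_ideal (g q)),
        (forall q1 q2, leQ q1 q2 <-> (forall a, g q1 a -> g q2 a)),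
        (forall q1 q2, (forall a, g q1 a <-> g q2 a) -> q1 = q2) &
        (forall I : L -> Prop, prime_ideal I ->
            exists q, forall a, g q a <-> I a)].

Definition iso_to_component (A : Type) (leA : A -> A -> Prop)
    (Q : Type) (leQ : Q -> Q -> Prop) (q0 : Q) : Prop :=
  exists f : A -> Q,
    [/\ (forall x, same_component leQ q0 (f x)),
        (forall y, same_component leQ q0 y -> exists x, f x = y),
        (forall x1 x2, f x1 = f x2 -> x1 = x2) &
        (forall x1 x2, leA x1 x2 <-> leQ (f x1) (f x2))].

(* Main.v *)
Require Import Defs.
From HB Require Import structures.
From mathcomp Require Import all_boot all_order.
From mathcomp Require all_algebra.
From Stdlib Require Import Relations Classical ClassicalEpsilon FunctionalExtensionality PropExtensionality ProofIrrelevance.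
Set Implicit Arguments. Unset Strict Implicit. Unset Printing Implicit Defensive.

Definition pre (c s : seq nat) : Prop := exists v, s = c ++ v.

Lemma pre_refl s : pre s s. Proof. by exists [::]; rewrite cats0. Qed.
Lemma pre_trans a b c : pre a b -> pre b c -> pre a c.
Proof. by move=> [v ->] [w ->]; exists (v ++ w); rewrite catA. Qed.
Lemma pre_rcons s x : pre s (rcons s x). Proof. by exists [:: x]; rewrite cats1. Qed.
Lemma pre_rconsW c w x : pre c w -> pre c (rcons w x).
Proof. move=> h; exact: pre_trans h (pre_rcons _ _). Qed.
Lemma pre_rconsE c w x : pre c (rcons w x) -> c = rcons w x \/ pre c w.
Proof.
move=> [v]; case/lastP: v => [|v y]; first by rewrite cats0 => ->; left.
by rewrite -rcons_cat => /rcons_inj [-> _]; right; exists v.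
Qed.
Lemma pre_size c s : pre c s -> size c <= size s.
Proof. by move=> [v ->]; rewrite size_cat leq_addr. Qed.
Lemma pre_nth c s k : pre c s -> k < size c -> nth 0 c k = nth 0 s k.
Proof. by move=> [v ->] h; rewrite nth_cat h. Qed.
Lemma pre_of_nth c s : size c <= size s -> (forall k, k < size c -> nth 0 c k = nth 0 s k) -> pre c s.
Proof.
move=> hs h; exists (drop (size c) s).
apply: (@eq_from_nth _ 0); first by rewrite size_cat size_drop subnKC.
move=> k _; rewrite nth_cat; case: ifP => hk; first by rewrite h.
by rewrite nth_drop subnKC // leqNgt hk.
Qed.
Lemma pre_total c1 c2 s : pre c1 s -> pre c2 s -> pre c1 c2 \/ pre c2 c1.
Proof.
move=> h1 h2; case: (leqP (size c1) (size c2)) => hl.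
  left; apply: pre_of_nth => // k hk; rewrite (pre_nth h1 hk) (pre_nth h2) //.
  exact: leq_trans hk hl.
right; apply: pre_of_nth; first exact: ltnW.
move=> k hk; rewrite (pre_nth h1) ?(pre_nth h2 hk) //; exact: ltn_trans hk hl.
Qed.
Lemma pre_digit t l s : pre (rcons t l) s -> l <= sumn s.
Proof. by move=> [v ->]; rewrite sumn_cat sumn_rcons; apply: leq_trans (leq_addl (sumn t) l) (leq_addr _ _). Qed.
Lemma pre_eqsize c s : pre c s -> size s <= size c -> c = s.
Proof. by move=> [v ->]; rewrite size_cat -{2}(addn0 (size c)) leq_add2l leqn0 => /nilP ->; rewrite cats0. Qed.
Lemma pre_nil s : pre [::] s. Proof. by exists s. Qed.
Lemma pre_cons_split u s : pre u s -> s = u \/ exists i, pre (rcons u i) s.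
Proof.
move=> [[|i v] ->]; first by left; rewrite cats0.
by right; exists i; exists v; rewrite cat_rcons.
Qed.

Lemma gen_le a b : gen a b -> Ple a b. Proof. by move=> h; apply: rt_step. Qed.
Lemma Ple_refl a : Ple a a. Proof. exact: rt_refl. Qed.
Lemma Ple_trans a b c : Ple a b -> Ple b c -> Ple a c. Proof. exact: rt_trans. Qed.

Lemma odd_rcons (t : seq nat) : odd (size t) -> exists t' m, t = rcons t' m /\ ~~ odd (size t').
Proof.
case/lastP: t => [|t' m] //=; rewrite size_rcons /= => h; by exists t', m; split.
Qed.
Lemma even_rcons (t : seq nat) : ~~ odd (size t) -> t = [::] \/ exists t' m, t = rcons t' m /\ odd (size t').
Proof.
case/lastP: t => [|t' m] /=; first by left.
rewrite size_rcons /= negbK => h; right; by exists t', m.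
Qed.

Lemma L1 t i : odd (size t) -> Ple (rcons t i) t.
Proof.
case/odd_rcons => t' [m [-> ht]].
case: i => [|i].
  apply: (@Ple_trans _ (rcons (rcons t' m) 1)); apply: gen_le.
    exact: (@genEa t' m m 0 1).
  exact: (@genEb t' m m 0 1).
apply: gen_le; exact: (@genEb t' m m 0 i.+1).
Qed.
Lemma L2 t i : ~~ odd (size t) -> Ple t (rcons t i).
Proof.
case/even_rcons => [->|[t' [m [-> ht]]]].
  case: i => [|i] /=.
    apply: (@Ple_trans _ [:: 1]); apply: gen_le; [exact: (@gen0a 1 0) | exact: (@gen0b 1 0)].
  apply: gen_le; exact: (@gen0a i.+1 0).
case: i => [|i].
  apply: (@Ple_trans _ (rcons (rcons t' m) 1)); apply: gen_le.
    exact: (@genOa t' m m 1 0).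
  exact: (@genOb t' m m 1 0).
apply: gen_le; exact: (@genOa t' m m i.+1 0).
Qed.
Lemma L3 t i j : odd (size t) -> i <= j -> Ple (rcons t i) (rcons t j).
Proof.
case/odd_rcons => t' [m [-> ht]]; rewrite leq_eqVlt => /orP [/eqP ->|h]; first exact: Ple_refl.
apply: gen_le; exact: (@genEa t' m m i j).
Qed.
Lemma L4 t i j : ~~ odd (size t) -> j <= i -> Ple (rcons t i) (rcons t j).
Proof.
move=> ht; rewrite leq_eqVlt => /orP [/eqP ->|h]; first exact: Ple_refl.
case/even_rcons: ht => [->|[t' [m [-> ht]]]].
  apply: gen_le; exact: (@gen0b i j).
apply: gen_le; exact: (@genOb t' m m i j).
Qed.

Lemma gen_size a z : gen a z -> size a <= size z + odd (size z) /\ size z <= size a + odd (size z).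
Proof.
case=> [i j _|i j _|t m k i j ht _ _|t m k i j ht _ _|t m k i j ht _ _|t m k i j ht _ _];
  rewrite ?size_rcons /= ?addn1 ?addn0 //; move: ht; case: (odd (size t)) => //= _;
  rewrite ?addn1 ?addn0 ?leqnn ?leqnSn //.
all: by split=> //; rewrite ltnW // ltnS leqnSn.
Qed.

Lemma B_even n : ~~ odd (n + odd n).
Proof. by rewrite oddD; case: (odd n). Qed.

Lemma Ple_size u y : Ple u y -> size u <= size y + odd (size y).
Proof.
move=> h; apply clos_rt_rt1n in h; induction h as [x|x u1 z hg _ ih]; first exact: leq_addr.
have [h1 _] := gen_size hg.
move: ih; rewrite leq_eqVlt => /orP [/eqP e|lt].
  move: h1; rewrite e; have := B_even (size z); case: (odd _) => //=; by rewrite addn0.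
apply: leq_trans h1 _; case: (odd (size u1)); rewrite ?addn1 ?addn0 //; exact: ltnW.
Qed.

Lemma Ple_size_low u y : Ple u y -> size y <= size u + odd (size y).
Proof.
move=> h; apply clos_rt_rt1n in h; induction h as [x|x u1 z hg _ ih]; first exact: leq_addr.
have [_ h1] := gen_size hg.
case oz: (odd (size z)) ih => /=; rewrite ?addn0 ?addn1 => ih;
  case ou: (odd (size u1)) h1; rewrite ?addn1 ?addn0 => h1.
- move: ih; rewrite leq_eqVlt => /orP [/eqP e|]; last by rewrite ltnS => ih; apply: leq_trans ih h1.
  by move: oz; rewrite e /= ou.
- by apply: leq_trans ih _; rewrite ltnS.
- move: ih; rewrite leq_eqVlt => /orP [/eqP e|ih]; first by move: oz; rewrite e ou.
  by apply: leq_trans ih h1.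
- exact: leq_trans ih h1.
Qed.

Lemma pre_nil_r c : pre c [::] -> c = [::].
Proof. by move=> [v]; case: c. Qed.

Lemma downexit a z c : gen a z -> pre c z -> ~ pre c a -> Ple a c.
Proof.
move=> g; have g' := g; case: g g' => [i j hij|i j hij|t m k i j ht hk hij|t m k i j ht hk hij|t m k i j ht hk hij|t m k i j ht hk hij] g.
- move=> hc hna; have := hc; rewrite -[[:: i]]/(rcons [::] i) => /pre_rconsE [e|/pre_nil_r e].
    by subst c; apply: gen_le.
  by subst c; case: hna; exact: pre_nil.
- move=> hc hna; have := hc; rewrite -[[:: j]]/(rcons [::] j) => /pre_rconsE [e|/pre_nil_r e].
    by subst c; apply: gen_le.
  by subst c; case: hna; exact: pre_nil.
- move=> /pre_rconsE [->|hc] hna; first exact: gen_le.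
  by case: hna; apply: pre_rconsW.
- move=> /pre_rconsE [->|hc] hna; first exact: gen_le.
  by case: hna; do 2 apply: pre_rconsW.
- move=> /pre_rconsE [->|/pre_rconsE [->|hc]] hna; first exact: gen_le.
    exact: L3.
  by case: hna; apply: pre_rconsW.
- move=> /pre_rconsE [->|hc] hna; first exact: gen_le.
  by case: hna; apply: pre_rconsW.
Qed.

Lemma rcons_nil (s : seq nat) x : rcons s x <> [::]. Proof. by case: s. Qed.

Lemma upexit y u : Ple u y -> forall s i, pre (rcons s i) u ->
  (forall i', i <= i' -> ~ pre (rcons s i') y) -> Ple s y.
Proof.
move=> h; apply clos_rt_rt1n in h; induction h as [x|x u1 z g hrest ih].
  by move=> s i hp hc; case: (hc i (leqnn i)).
have r : Ple u1 z by apply: clos_rt1n_rt.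
move=> s i hp hc.
have g' := g; case: g g' hp ih r => [i0 j0 hij|i0 j0 hij|t m k i0 j0 ht hk hij|t m k i0 j0 ht hk hij|t m k i0 j0 ht hk hij|t m k i0 j0 ht hk hij] g hp ih r.
- by case/pre_nil_r/rcons_nil: hp.
- move: hp; rewrite -[[:: i0]]/(rcons [::] i0) => /pre_rconsE [/rcons_inj [-> _]|/pre_nil_r/rcons_nil //].
  apply: Ple_trans r; exact: (@L2 [::] j0).
- move/pre_rconsE: hp => [/rcons_inj [? ?]|hp].
    subst; apply: (ih _ j0 (pre_refl _)) => i' hi'; apply: hc; exact: leq_trans (ltnW hij) hi'.
  by apply: (ih _ i) => //; apply: pre_rconsW.
- move/pre_rconsE: hp => [/rcons_inj [-> _]|/pre_rconsE [/rcons_inj [-> _]|hp]].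
  + apply: Ple_trans r; exact: L4.
  + apply: Ple_trans r; exact: L2.
  + by apply: (ih _ i) => //; apply: pre_rconsW.
- move/pre_rconsE: hp => [/rcons_inj [? ?]|hp].
    subst; apply: (ih _ m); first by apply: pre_rconsW; apply: pre_refl.
    move=> i' hi'; apply: hc; exact: leq_trans hk hi'.
  by apply: (ih _ i) => //; do 2 apply: pre_rconsW.
- move/pre_rconsE: hp => [/rcons_inj [-> _]|hp].
    apply: Ple_trans r; apply: L2; by rewrite size_rcons /= ht.
  by apply: (ih _ i) => //; apply: pre_rconsW.
Qed.

Lemma downD a z t l : gen a z -> pre (rcons t l) z -> ~ pre (rcons t l) a ->
  Ple a t \/ (exists t' l', Ple t' t /\ l <= l' /\ pre (rcons t' l') a).
Proof.
move=> g; case: g => [i0 j0 hij|i0 j0 hij|t0 m k i0 j0 ht hk hij|t0 m k i0 j0 ht hk hij|t0 m k i0 j0 ht hk hij|t0 m k i0 j0 ht hk hij].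
- rewrite -[[:: i0]]/(rcons [::] i0) => /pre_rconsE [/rcons_inj [? ?]|/pre_nil_r/rcons_nil //] _.
  by subst; left; apply: Ple_refl.
- rewrite -[[:: j0]]/(rcons [::] j0) => /pre_rconsE [/rcons_inj [? ?]|/pre_nil_r/rcons_nil //] _.
  subst; right; exists [::], i0; split; [exact: Ple_refl| split; [exact: ltnW | exact: pre_refl]].
- move/pre_rconsE => [/rcons_inj [? ?]|hp] hn; last by case: hn; apply: pre_rconsW.
  subst; left; apply: L1; by rewrite size_rcons /= ht.
- move/pre_rconsE => [/rcons_inj [? ?]|hp] hn; last by case: hn; do 2 apply: pre_rconsW.
  subst; right; exists t0, m; split; [exact: Ple_refl | split; [by [] | exact: pre_rcons]].
- move/pre_rconsE => [/rcons_inj [? ?]|/pre_rconsE [/rcons_inj [? ?]|hp]] hn.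
  + by subst; left; apply: L3.
  + by subst; left; apply: L1.
  + by case: hn; apply: pre_rconsW.
- move/pre_rconsE => [/rcons_inj [? ?]|hp] hn; last by case: hn; apply: pre_rconsW.
  subst; right; exists (rcons t0 m), i0; split; [exact: Ple_refl| split; [exact: ltnW | exact: pre_refl]].
Qed.

Module PhiM.
From mathcomp Require Import all_algebra.
Import Order.TTheory GRing.Theory Num.Theory.

Local Open Scope ring_scope.
Definition wq (i : nat) : rat := (i.+1%:R)^-1.
Definition phi (s : seq nat) : rat :=
  \sum_(k < size s) (if odd k then - wq (nth 0%N s k) else wq (nth 0%N s k)).

Lemma phi_nil : phi [::] = 0. Proof. by rewrite /phi big_ord0. Qed.
Lemma phi_rcons s i : phi (rcons s i) = phi s + (if odd (size s) then - wq i else wq i).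
Proof.
rewrite /phi size_rcons big_ord_recr /= nth_rcons ltnn eqxx; congr (_ + _).
by apply: eq_bigr => k _; rewrite nth_rcons ltn_ord.
Qed.
Lemma wq_pos i : 0 < wq i. Proof. by rewrite /wq invr_gt0 ltr0Sn. Qed.
Lemma wq_lt i j : (i < j)%N -> wq j < wq i.
Proof. by move=> h; rewrite /wq ltf_pV2 ?posrE ?ltr0Sn // ltr_nat ltnS. Qed.
Lemma wq_le i j : (i <= j)%N -> wq j <= wq i.
Proof. by rewrite leq_eqVlt => /orP [/eqP ->|h] //; apply: ltW; apply: wq_lt. Qed.

Lemma gen_phi a z : gen a z -> phi a < phi z.
Proof.
case=> [i j hij|i j hij|t m k i j ht hk hij|t m k i j ht hk hij|t m k i j ht hk hij|t m k i j ht hk hij].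
- by rewrite -[[:: i]]/(rcons [::] i) phi_rcons phi_nil add0r /= wq_pos.
- by rewrite -[[:: i]]/(rcons [::] i) -[[:: j]]/(rcons [::] j) !phi_rcons /= ltrD2l wq_lt.
- by rewrite !phi_rcons !size_rcons /= (negbTE ht) /= ltrD2l ltrN2 wq_lt.
- rewrite !phi_rcons !size_rcons /= (negbTE ht) /= -addrA ltrD2l.
  rewrite -[wq k]addr0; apply: ler_ltD; first exact: wq_le.
  by rewrite oppr_lt0 wq_pos.
- rewrite !phi_rcons !size_rcons /= ht /= -addrA ltrD2l.
  rewrite -[- wq k]addr0; apply: ler_ltD; first by rewrite lerN2 wq_le.
  exact: wq_pos.
- by rewrite !phi_rcons !size_rcons /= ht /= ltrD2l wq_lt.
Qed.

Lemma Ple_phi a b : Ple a b -> a = b \/ phi a < phi b.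
Proof.
move=> h; apply clos_rt_rt1n in h; induction h as [x|x u1 z g _ ih]; first by left.
right; case: ih => [<-|h]; first exact: gen_phi.
exact: lt_trans (gen_phi g) h.
Qed.

Lemma Ple_anti a b : Ple a b -> Ple b a -> a = b.
Proof.
move=> /Ple_phi [//|h1] /Ple_phi [//|h2].
by have := lt_trans h1 h2; rewrite ltxx.
Qed.

End PhiM.
Import PhiM.

Definition Qt := (seq nat + (nat -> nat))%type.
Definition leQ (x y : Qt) : Prop :=
  match x, y with inl s, inl t => Ple s t | inr a, inr b => a = b | _, _ => False end.
Definition ext (c : seq nat) (x : Qt) : Prop :=
  match x with inl s => pre c s | inr a => forall k, k < size c -> nth 0 c k = a k end.
Definition Nb (x : Qt) (m : nat) (y : Qt) : Prop :=
  match x with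
  | inl s => y = inl s \/ exists i, m <= i /\ ext (rcons s i) y
  | inr a => ext (mkseq a m) y end.
Definition isopen (U : Qt -> Prop) := forall x, U x -> exists m, forall y, Nb x m y -> U y.
Definition clopen (U : Qt -> Prop) := isopen U /\ isopen (fun x => ~ U x).
Definition downset (U : Qt -> Prop) := forall x y, leQ x y -> U y -> U x.
Definition goodset (U : Qt -> Prop) := downset U /\ clopen U.

Lemma ext_trans c d x : pre c d -> ext d x -> ext c x.
Proof.
case: x => [s|a] /= h1 h2; first exact: pre_trans h1 h2.
move=> k hk; rewrite (pre_nth h1 hk) h2 //; exact: leq_trans hk (pre_size h1).
Qed.
Lemma ext_rconsW c i x : ext (rcons c i) x -> ext c x.
Proof. exact: ext_trans (pre_rcons _ _). Qed.
Lemma ext_split u x : ext u x -> x = inl u \/ exists i, ext (rcons u i) x.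
Proof.
case: x => [s|a] /=.
  by move/pre_cons_split => [->|[i h]]; [left|right; exists i].
move=> h; right; exists (a (size u)) => k; rewrite size_rcons ltnS nth_rcons.
rewrite leq_eqVlt => /orP [/eqP ->|hk]; first by rewrite ltnn eqxx.
by rewrite hk h.
Qed.
Lemma ext_total c1 c2 x : ext c1 x -> ext c2 x -> pre c1 c2 \/ pre c2 c1.
Proof.
case: x => [s|a] /=; first exact: pre_total.
move=> h1 h2; case: (leqP (size c1) (size c2)) => hl.
  left; apply: pre_of_nth => // k hk; rewrite h1 // h2 //; exact: leq_trans hk hl.
right; apply: pre_of_nth; first exact: ltnW.
move=> k hk; rewrite h1 ?h2 //; exact: ltn_trans hk hl.
Qed.
Lemma ext_mk a m : ext (mkseq a m) (inr a).
Proof. by move=> k /=; rewrite size_mkseq => hk; rewrite nth_mkseq. Qed.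
Lemma ext_pre_mk a c M : ext c (inr a) -> size c <= M -> pre c (mkseq a M).
Proof.
move=> h hs; apply: pre_of_nth; first by rewrite size_mkseq.
move=> k hk; rewrite h // nth_mkseq //; exact: leq_trans hk hs.
Qed.

Lemma Nb_mono x m m' y : m <= m' -> Nb x m' y -> Nb x m y.
Proof.
case: x => [s|a] /= hm.
  by move=> [->|[i [hi h]]]; [left|right; exists i; split=> //; exact: leq_trans hm hi].
apply: ext_trans; apply: pre_of_nth; rewrite !size_mkseq // => k hk.
by rewrite !nth_mkseq //; exact: leq_trans hk hm.
Qed.

Lemma open_and U V : isopen U -> isopen V -> isopen (fun x => U x /\ V x).
Proof.
move=> hU hV x [ux vx]; have [m1 h1] := hU x ux; have [m2 h2] := hV x vx.
exists (maxn m1 m2) => y hy; split.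
  by apply: h1; apply: Nb_mono hy; exact: leq_maxl.
by apply: h2; apply: Nb_mono hy; exact: leq_maxr.
Qed.
Lemma open_or U V : isopen U -> isopen V -> isopen (fun x => U x \/ V x).
Proof.
move=> hU hV x [ux|vx].
  by have [m h] := hU x ux; exists m => y /h; left.
by have [m h] := hV x vx; exists m => y /h; right.
Qed.
Lemma open_ext U V : isopen U -> (forall x, U x <-> V x) -> isopen V.
Proof. move=> h e x /e /h [m hm]; exists m => y /hm /e //. Qed.
Lemma clopen_and U V : clopen U -> clopen V -> clopen (fun x => U x /\ V x).
Proof.
move=> [h1 h2] [h3 h4]; split; first exact: open_and.
apply: (open_ext (open_or h2 h4)) => x; tauto.
Qed.
Lemma clopen_or U V : clopen U -> clopen V -> clopen (fun x => U x \/ V x).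
Proof.
move=> [h1 h2] [h3 h4]; split; first exact: open_or.
apply: (open_ext (open_and h2 h4)) => x; tauto.
Qed.
Lemma good0 : goodset (fun _ => False).
Proof. split; first by []. by split; [move=> x []|move=> x _; exists 0 => y _ []]. Qed.
Lemma good1 : goodset (fun _ => True).
Proof. split; first by []. by split; [move=> x _; exists 0|move=> x []]. Qed.
Lemma goodI U V : goodset U -> goodset V -> goodset (fun x => U x /\ V x).
Proof.
move=> [d1 c1] [d2 c2]; split; last exact: clopen_and.
move=> x y h [u v]; split; [exact: d1 h u|exact: d2 h v].
Qed.
Lemma goodU U V : goodset U -> goodset V -> goodset (fun x => U x \/ V x).
Proof.
move=> [d1 c1] [d2 c2]; split; last exact: clopen_or.
move=> x y h [u|v]; [left; exact: d1 h u|right; exact: d2 h v].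
Qed.

Lemma downset_of_gen U : (forall a z, gen a z -> U (inl z) -> U (inl a)) -> downset U.
Proof.
move=> hg [s|a] [t|b] //=; last by move=> ->.
move=> h; apply clos_rt_rt1n in h; induction h as [x|x u1 z g _ ih] => //.
by move=> hz; apply: (hg _ _ g); apply: ih.
Qed.

Definition Din (y : seq nat) (n : nat) (x : Qt) : Prop :=
  (exists s, x = inl s /\ Ple s y) \/ (exists t l, Ple t y /\ n <= l /\ ext (rcons t l) x).

Lemma Din_gen y n a z : gen a z -> Din y n (inl z) -> Din y n (inl a).
Proof.
move=> g [[s [[<-] h]]|[t [l [ht [hl hz]]]]].
  left; exists a; split=> //; exact: Ple_trans (gen_le g) h.
case: (classic (pre (rcons t l) a)) => hpa.
  by right; exists t, l.
case: (downD g hz hpa) => [h|[t' [l' [h1 [h2 h3]]]]].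
  left; exists a; split=> //; exact: Ple_trans h ht.
right; exists t', l'; split; first exact: Ple_trans h1 ht.
split => //; exact: leq_trans hl h2.
Qed.

Lemma Din_down y n : downset (Din y n).
Proof. apply: downset_of_gen => a z; exact: Din_gen. Qed.

Lemma Din_open y n : isopen (Din y n).
Proof.
move=> x [[s [-> h]]|[t [l [ht [hl hx]]]]].
  exists n => y' [->|[i [hi he]]]; first by left; exists s.
  by right; exists s, i.
case: x hx => [s|a] hx.
  exists 0 => y' [->|[i [_ he]]]; first by right; exists t, l.
  right; exists t, l; split=> //; split=> //; apply: ext_trans he; exact: pre_rconsW.
exists (size (rcons t l)) => y' hy; right; exists t, l; split=> //; split=> //.
apply: ext_trans hy; exact: ext_pre_mk.
Qed.

Lemma Din_copen y n : isopen (fun x => ~ Din y n x).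
Proof.
move=> [s|a] hx.
  exists (sumn y).+1 => y' [->//|[i [hi he]]] hD; apply: hx.
  have cond : forall i', i <= i' -> ~ pre (rcons s i') y.
    move=> i' hi' /pre_digit hd; have := leq_trans hi hi'.
    by rewrite ltnNge hd.
  case: hD => [[u [e hu]]|[t [l [ht [hl he']]]]].
    subst y'; left; exists s; split=> //; exact: upexit hu s i he cond.
  case: (ext_total he he') => /pre_rconsE.
    case=> [/rcons_inj [e _]|hp].
      by subst t; left; exists s.
    left; exists s; split=> //; exact: upexit ht s i hp cond.
  case=> [/rcons_inj [e _]|hp].
    by subst t; left; exists s.
  by right; exists t, l.
exists (size y + odd (size y)).+2 => y' hy hD; apply: hx.
case: hD => [[u [e hu]]|[t [l [ht [hl he']]]]].
  subst y'; have := pre_size hy; rewrite size_mkseq => h1.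
  have := leq_trans h1 (Ple_size hu); by rewrite ltnNge leqW.
case: (ext_total hy he') => hp.
  have := pre_size hp; rewrite size_mkseq size_rcons => h1.
  rewrite ltnS in h1; have := leq_trans h1 (Ple_size ht); by rewrite ltnn.
right; exists t, l; split=> //; split=> //. apply: (ext_trans hp); exact: ext_mk.
Qed.

Lemma Din_good y n : goodset (Din y n).
Proof. split; [exact: Din_down|split; [exact: Din_open|exact: Din_copen]]. Qed.

Lemma ext_clopen c : clopen (ext c).
Proof.
split.
  move=> [s|a] hx.
    exists 0 => y' [->//|[i [_ he]]]; apply: ext_trans he; exact: pre_rconsW.
  exists (size c) => y' hy; apply: ext_trans hy; exact: ext_pre_mk.
move=> [s|a] hx.
  exists (sumn c).+1 => y' [->//|[i [hi he]]] hc.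
  case: (ext_total hc he) => [/pre_rconsE [e|hp]|hp].
  + have := @pre_digit s i c; rewrite -e => /(_ (pre_refl c)) => /(leq_trans hi); by rewrite ltnn.
  + by apply: hx.
  + by have := leq_trans hi (pre_digit hp); rewrite ltnn.
exists (size c) => y' hy hc; apply: hx.
have e : c = mkseq a (size c).
  case: (ext_total hc hy) => hp; first by apply: pre_eqsize hp _; rewrite size_mkseq.
  by symmetry; apply: pre_eqsize hp _; rewrite size_mkseq.
rewrite e; exact: ext_mk.
Qed.

Definition Dplus (c : seq nat) (n : nat) (x : Qt) : Prop := ext c x \/ Din c n x.

Lemma Dplus_good c n : goodset (Dplus c n).
Proof.
split; last exact: clopen_or (ext_clopen c) (proj2 (Din_good c n)).
apply: downset_of_gen => a z g [hz|hz]; last by right; exact: Din_gen g hz.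
case: (classic (pre c a)) => h; first by left.
by right; left; exists a; split=> //; exact: downexit g hz h.
Qed.

Lemma tail_bound y t l a : Ple t y -> ext (rcons t l) (inr a) ->
  l <= sumn (mkseq a (size y + odd (size y)).+1).
Proof.
move=> h he; apply: pre_digit; apply: ext_pre_mk he _.
by rewrite size_rcons ltnS; exact: Ple_size h.
Qed.

Lemma Din_inr y n a : n > sumn (mkseq a (size y + odd (size y)).+1) -> ~ Din y n (inr a).
Proof.
move=> hn [[s [//]]|[t [l [ht [hl he]]]]].
have := leq_trans hn (leq_trans hl (tail_bound ht he)); by rewrite ltnn.
Qed.

Lemma sep x y : ~ leQ x y -> exists U, goodset U /\ U y /\ ~ U x.
Proof.
case: y => [t|b].
  exists (Din t (match x with inl s => (sumn s).+1 | inr a => (sumn (mkseq a (size t + odd (size t)).+1)).+1 end)).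
  split; first exact: Din_good.
  split; first by left; exists t; split=> //; exact: Ple_refl.
  case: x H => [s|a] hn.
    case=> [[s' [[<-] h]]|[t' [l [ht [hl he]]]]]; first by apply: hn.
    by have := leq_trans hl (pre_digit he); rewrite ltnn.
  by apply: Din_inr.
case: x => [s|a] hn.
  exists (Dplus (mkseq b (size s).+2) 0); split; first exact: Dplus_good.
  split; first by left; exact: ext_mk.
  case=> [/pre_size|[[s' [[<-] h]]|[t' [l [ht [hl he]]]]]].
  - by rewrite size_mkseq ltnNge leqW.
  - have := Ple_size_low h; rewrite size_mkseq.
    case: (odd _); rewrite ?addn1 ?addn0 => h0; [by move: h0; rewrite ltnn | by move: h0; rewrite ltnNge leqW].
  - have h1 := Ple_size_low ht; have h2 := pre_size he; rewrite size_rcons in h2.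
    move: h1; rewrite size_mkseq => h1.
    have h3 : (size s).+2 <= (size t').+1.
      by apply: leq_trans h1 _; case: (odd _); rewrite ?addn1 ?addn0.
    by have := leq_trans h3 h2; rewrite ltnNge leqW.
have [p hp] : exists p, a p <> b p.
  apply: not_all_ex_not => h; apply: hn; exact: functional_extensionality.
set c := mkseq b p.+1.
exists (Dplus c (sumn (mkseq a (size c + odd (size c)).+1)).+1); split; first exact: Dplus_good.
split; first by left; exact: ext_mk.
case=> [he|]; last by apply: Din_inr.
by apply: hp; rewrite -he ?size_mkseq // nth_mkseq.
Qed.

Definition pb (P : Prop) : bool := if excluded_middle_informative P then true else false.
Lemma pbP (P : Prop) : reflect P (pb P).
Proof. rewrite /pb; case: excluded_middle_informative => h; by constructor. Qed.


Definition Lt := {U : Qt -> Prop | goodset U}.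
Lemma Lt_eq (a b : Lt) : (forall x, proj1_sig a x <-> proj1_sig b x) -> a = b.
Proof.
case: a b => [U hU] [V hV] /= h.
have e : U = V by apply: functional_extensionality => x; apply: propositional_extensionality.
subst V; by rewrite (proof_irrelevance _ hU hV).
Qed.
Definition Lt_eqb (a b : Lt) := pb (a = b).
Lemma Lt_eqP : Equality.axiom Lt_eqb.
Proof. move=> a b; exact: pbP. Qed.
HB.instance Definition _ := hasDecEq.Build Lt Lt_eqP.

Definition Lt_find (P : pred Lt) (n : nat) : option Lt :=
  match excluded_middle_informative (exists x, P x) with
  | left h => Some (proj1_sig (constructive_indefinite_description _ h))
  | right _ => None end.
Lemma Lt_find1 P n x : Lt_find P n = Some x -> P x.
Proof. rewrite /Lt_find; case: excluded_middle_informative => // h [<-].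
exact: (proj2_sig (constructive_indefinite_description _ h)). Qed.
Lemma Lt_find2 (P : pred Lt) : (exists x, P x) -> exists n, Lt_find P n.
Proof. move=> h; exists 0; rewrite /Lt_find; case: excluded_middle_informative => //. Qed.
Lemma Lt_find3 (P Q : pred Lt) : P =1 Q -> Lt_find P =1 Lt_find Q.
Proof. move=> h; have -> // : P = Q by apply: functional_extensionality. Qed.
HB.instance Definition _ := hasChoice.Build Lt Lt_find1 Lt_find2 Lt_find3.

Definition Lmeet (a b : Lt) : Lt := exist _ _ (goodI (proj2_sig a) (proj2_sig b)).
Definition Ljoin (a b : Lt) : Lt := exist _ _ (goodU (proj2_sig a) (proj2_sig b)).
Definition Lle (a b : Lt) := Lmeet a b == a.
Definition Llt (a b : Lt) := (b != a) && Lle a b.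
Lemma Lle_def a b : Lle a b = (Lmeet a b == a). Proof. by []. Qed.
Lemma Llt_def a b : Llt a b = (b != a) && Lle a b. Proof. by []. Qed.
Lemma LmeetC : commutative Lmeet.
Proof. move=> a b; apply: Lt_eq => x /=; tauto. Qed.
Lemma LjoinC : commutative Ljoin.
Proof. move=> a b; apply: Lt_eq => x /=; tauto. Qed.
Lemma LmeetA : associative Lmeet.
Proof. move=> a b c; apply: Lt_eq => x /=; tauto. Qed.
Lemma LjoinA : associative Ljoin.
Proof. move=> a b c; apply: Lt_eq => x /=; tauto. Qed.
Lemma LjoinKI : forall y x : Lt, Lmeet x (Ljoin x y) = x.
Proof. move=> a b; apply: Lt_eq => x /=; tauto. Qed.
Lemma LmeetKU : forall y x : Lt, Ljoin x (Lmeet x y) = x.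
Proof. move=> a b; apply: Lt_eq => x /=; tauto. Qed.
Lemma LmeetUl : left_distributive Lmeet Ljoin.
Proof. move=> a b c; apply: Lt_eq => x /=; tauto. Qed.
Lemma Lmeetxx : idempotent_op Lmeet.
Proof. move=> a; apply: Lt_eq => x /=; tauto. Qed.

Fact Ldisp : Order.disp_t. Proof. exact: Order.Disp tt tt. Qed.
HB.instance Definition _ := Order.isMeetJoinDistrLattice.Build Ldisp Lt
  Lle_def Llt_def LmeetC LjoinC LmeetA LjoinA LjoinKI LmeetKU LmeetUl Lmeetxx.

Definition Lbot : Lt := exist _ _ good0.
Definition Ltop : Lt := exist _ _ good1.
Lemma LleP (a b : Lt) : reflect (forall x, proj1_sig a x -> proj1_sig b x) (Order.le a b).
Proof.
apply: (iffP eqP) => [e x| h].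
  rewrite -e /=; tauto.
apply: Lt_eq => x /=; move: (h x); tauto.
Qed.
Lemma Lbot_le (a : Lt) : Order.le Lbot a. Proof. by apply/LleP. Qed.
Lemma Lle_top (a : Lt) : Order.le a Ltop. Proof. by apply/LleP. Qed.
HB.instance Definition _ := Order.hasBottom.Build Ldisp Lt Lbot_le.
HB.instance Definition _ := Order.hasTop.Build Ldisp Lt Lle_top.
Check (Lt : tbDistrLatticeType Ldisp).
Lemma Lmeet_val (a b : Lt) x : proj1_sig (Order.meet a b) x <-> proj1_sig a x /\ proj1_sig b x.
Proof. by []. Qed.
Lemma Ljoin_val (a b : Lt) x : proj1_sig (Order.join a b) x <-> proj1_sig a x \/ proj1_sig b x.
Proof. by []. Qed.
Lemma Lbot_val x : proj1_sig (Order.bottom : Lt) x <-> False. Proof. by []. Qed.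
Lemma Ltop_val x : proj1_sig (Order.top : Lt) x <-> True. Proof. by []. Qed.

Definition vl (a : Lt) : Qt -> Prop := proj1_sig a.
Lemma vl_good (a : Lt) : goodset (vl a). Proof. exact: proj2_sig a. Qed.

Fixpoint prefc (c : seq nat -> nat) (k : nat) : seq nat :=
  if k is k'.+1 then rcons (prefc c k') (c (prefc c k')) else [::].
Lemma prefc_mk c k : prefc c k = mkseq (fun j => c (prefc c j)) k.
Proof. by elim: k => [|k ih] //=; rewrite mkseqS -ih. Qed.

Section Compact.
Variable I : Lt -> Prop.
Hypothesis hI : prime_ideal I.
Let F (U : Lt) := ~ I U.

Lemma F_top : F Order.top. Proof. by case: hI. Qed.
Lemma nF_bot : ~ F Order.bottom. Proof. by case: hI => h _ _ _ _; apply. Qed.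
Lemma F_meet U V : F U -> F V -> F (Order.meet U V).
Proof. by case: hI => _ _ _ _ hp hU hV /hp [] . Qed.
Lemma nF_join U V : ~ F U -> ~ F V -> ~ F (Order.join U V).
Proof. case: hI => _ _ hj _ _ hU hV; apply; apply: hj; exact: NNPP. Qed.
Lemma F_up U V : F U -> Order.le U V -> F V.
Proof. by case: hI => _ hd _ _ _ hU hle hV; apply: hU; exact: hd hle hV. Qed.

Definition Phi (u : seq nat) := forall U V : Lt, F U -> ~ F V ->
  exists x, ext u x /\ vl U x /\ ~ vl V x.
Definition goodpt (q : Qt) := forall U V : Lt, F U -> ~ F V -> vl U q /\ ~ vl V q.

Lemma Phi_nil : Phi [::].
Proof.
move=> U V hU hV; apply: NNPP => hn; apply: hV; apply: (F_up hU).
apply/LleP => x hx; apply: NNPP => hnv; apply: hn; exists x; split=> //.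
case: x hx hnv => [s|a] _ _ /=; [exact: pre_nil | by []].
Qed.

Lemma combine u (k : nat) : (forall i, ~ Phi (rcons u i)) ->
  exists U V, F U /\ ~ F V /\ forall i, i < k -> forall x, ext (rcons u i) x -> ~ (vl U x /\ ~ vl V x).
Proof.
move=> hn; elim: k => [|k [U [V [hU [hV h]]]]].
  exists Order.top, Order.bottom; split; first exact: F_top.
  by split; [exact: nF_bot|].
have := hn k; rewrite /Phi => /not_all_ex_not [Uk /not_all_ex_not [Vk]].
move=> hh; have [hUk hh2] := imply_to_and _ _ hh; have [hVk hk] := imply_to_and _ _ hh2.
exists (Order.meet U Uk), (Order.join V Vk); split; first exact: F_meet.
split; first exact: nF_join.
move=> i; rewrite ltnS leq_eqVlt => /orP [/eqP ->|hi] x he [hx1 hx2].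
  apply: hk; exists x; split=> //; split; first by case: hx1.
  by move=> h0; apply: hx2; right.
apply: (h i hi x he); split; first by case: hx1.
by move=> h0; apply: hx2; left.
Qed.

Lemma Phi_step u : Phi u -> goodpt (inl u) \/ exists i, Phi (rcons u i).
Proof.
move=> hu; case: (classic (goodpt (inl u))) => hg; first by left.
right; apply: NNPP => hn.
have hn' : forall i, ~ Phi (rcons u i) by move=> i hi; apply: hn; exists i.
move: hg; rewrite /goodpt => /not_all_ex_not [U0 /not_all_ex_not [V0]].
move=> hh; have [hU0 hh2] := imply_to_and _ _ hh; have [hV0 hw] := imply_to_and _ _ hh2.
have [[_ [_ cU]] [_ [oV _]]] := (vl_good U0, vl_good V0).
have cW : isopen (fun x => ~ (vl U0 x /\ ~ vl V0 x)).
  apply: (open_ext (open_or cU oV)) => x; split; first tauto.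
  move=> h; case: (classic (vl U0 x)) => h1; [right; exact: NNPP (fun h2 => h (conj h1 h2))|by left].
have [m hm] := cW _ hw.
have [U [V [hU [hV hc]]]] := combine m hn'.
have [x [he [[hx1 hx2] hx3]]] := hu _ _ (F_meet hU0 hU) (nF_join hV0 hV).
have hx3' : ~ vl V0 x /\ ~ vl V x.
  by split => h; apply: hx3; [left|right].
case: (ext_split he) => [e|[i hi]].
  by apply: (hm x); [left | split; [|case: hx3']].
case: (leqP m i) => him.
  by apply: (hm x); [right; exists i | split; [|case: hx3']].
by apply: (hc i him x hi); split; [|case: hx3'].
Qed.

Lemma goodpt_ok q : goodpt q -> forall a, ~ vl a q <-> I a.
Proof.
move=> hg a; split => h.
  apply: NNPP => hn; apply: h; exact: (proj1 (hg a Order.bottom hn nF_bot)).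
by have := proj2 (hg Order.top a F_top (fun h' => h' h)).
Qed.

Lemma spec_surj : exists q, forall a, ~ vl a q <-> I a.
Proof.
case: (classic (exists u, Phi u /\ goodpt (inl u))) => [[u [_ hg]]|hn].
  by exists (inl u); apply: goodpt_ok.
have H : forall u, exists i, Phi u -> Phi (rcons u i).
  move=> u; case: (classic (Phi u)) => hu; last by exists 0.
  case: (Phi_step hu) => [hg|[i hi]]; last by exists i.
  by case: hn; exists u.
pose c u := proj1_sig (constructive_indefinite_description _ (H u)).
have hc : forall u, Phi u -> Phi (rcons u (c u)).
  move=> u; exact: (proj2_sig (constructive_indefinite_description _ (H u))).
pose al j := c (prefc c j).
have hP : forall k, Phi (mkseq al k).
  move=> k; rewrite -prefc_mk; elim: k => [|k ih] /=; [exact: Phi_nil|exact: hc].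
exists (inr al); apply: goodpt_ok => U V hU hV; split.
  apply: NNPP => hnu.
  have [_ [_ cU]] := vl_good U.
  have [m hm] := cU _ hnu.
  have [x [he [hx _]]] := hP m U Order.bottom hU nF_bot.
  exact: hm x he hx.
move=> hv; have [_ [oV _]] := vl_good V.
have [m hm] := oV _ hv.
have [x [he [_ hx]]] := hP m Order.top V F_top hV.
exact: hx (hm x he).
Qed.
End Compact.

Lemma ct_sym (T : Type) (R : T -> T -> Prop) : (forall x y, R x y -> R y x) ->
  forall x y, clos_trans T R x y -> clos_trans T R y x.
Proof.
move=> hs x y h; induction h as [x y h|x y z _ ih1 _ ih2]; first by apply: t_step; apply: hs.
exact: t_trans ih2 ih1.
Qed.

Lemma comp_root s : clos_trans _ (Defs.comparable Ple) [::] s.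
Proof.
elim/last_ind: s => [|t i ih]; first by apply: t_step; left; exact: Ple_refl.
apply: t_trans ih _; apply: t_step.
case h: (odd (size t)); [right; exact: L1 | left; apply: L2; by rewrite h].
Qed.

Lemma Ple_connected : connected Ple.
Proof.
move=> x y; apply: t_trans (comp_root y).
apply: ct_sym (comp_root x) => a b [h|h]; [right|left]; exact: h.
Qed.

Lemma ct_inl a b : clos_trans _ (Defs.comparable Ple) a b -> clos_trans _ (Defs.comparable leQ) (inl a) (inl b).
Proof.
move=> h; induction h as [x y h|x y z _ ih1 _ ih2]; first exact: t_step.
exact: t_trans ih1 ih2.
Qed.

Lemma ct_stay x y : clos_trans _ (Defs.comparable leQ) x y -> (exists s, x = inl s) -> exists s, y = inl s.
Proof.
move=> h; induction h as [x y h|x y z _ ih1 _ ih2]; last by move=> /ih1 /ih2.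
move=> [s e]; subst x; case: y h => [t|b] h; first by exists t.
by case: h.
Qed.

Lemma leQ_anti x y : leQ x y -> leQ y x -> x = y.
Proof.
case: x => [s|a]; case: y => [t|b] //=; last by move=> ->.
by move=> h1 h2; rewrite (Ple_anti h1 h2).
Qed.

Theorem lemma2p5 :
  (exists (Q : Type) (leQ : Q -> Q -> Prop) (q0 : Q),
      representable leQ /\ iso_to_component Ple leQ q0)
  /\ connected Ple.
Proof.
split; last exact: Ple_connected.
exists Qt, leQ, (inl [::]); split.
  have hiff : forall q1 q2, leQ q1 q2 <-> (forall a : Lt, ~ vl a q1 -> ~ vl a q2).
    move=> q1 q2; split.
      move=> hle a h1 h2; apply: h1; have [hd _] := vl_good a; exact: hd hle h2.
    move=> h; apply: NNPP => hn; have [U [hU [hU2 hU1]]] := sep hn.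
    exact: (h (exist _ U hU) hU1 hU2).
  exists Ldisp, [the tbDistrLatticeType Ldisp of Lt], (fun q (a : Lt) => ~ vl a q).
  split.
  - move=> q; split.
    + by [].
    + by move=> x y /LleP hle hx hy; apply: hx; apply: hle.
    + by move=> x y hx hy [].
    + by apply.
    + move=> x y h; apply: NNPP => hn; apply: h; split; apply: NNPP => hh; apply: hn; tauto.
  - exact: hiff.
  - move=> q1 q2 h; apply: leQ_anti; apply/hiff => a; by move/h.
  - move=> I hI; have [q hq] := spec_surj hI; by exists q.
exists inl; split.
- move=> x; apply: ct_inl; exact: comp_root.
- move=> y /ct_stay [|s ->]; first by exists [::].
  by exists s.
- by move=> x1 x2 [].
- by [].
Qed.
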